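(* Let $G_m$ be a bounded Vilenkin group. There is a constant $c$ depending only on $m$ such that the following holds. Let $N\in P_+$, $0\le k\le N-1$, $k+1\le l\le N$, and $x\in I_N^{k,l}$. Then for every integer $n\ge M_N$, $$\int_{I_N}|K_n(x-t)|\,d\mu(t)\le \frac{c\,M_lM_k}{M_N^2}.$$
   Context: Let $m=(m_0,m_1,\dots)$ be integers $m_k\ge2$ with $\sup_km_k<\infty$. $G_m=\prod_k Z_{m_k}$ ($Z_{m_k}=\{0,\dots,m_k-1\}$ with addition mod $m_k$) with the product of uniform probability measures $\mu$; $x-t$ is coordinatewise subtraction mod $m_k$. $M_0=1$, $M_{k+1}=m_kM_k$; every $n\in\mathbb N$ is written uniquely as $n=\sum_jn_jM_j$, $n_j\in Z_{m_j}$. $r_k(x)=\exp(2\pi ix_k/m_k)$, $\psi_n=\prod_kr_k^{n_k}$. Dirichlet kernel $D_n=\sum_{k=0}^{n-1}\psi_k$, Fejér kernel $K_n=\frac1n\sum_{k=0}^{n-1}D_k$ ($n\ge1$). $I_N=\{y\in G_m: y_0=\dots=y_{N-1}=0\}$. For $0\le k<l<N$, $I_N^{k,l}$ is the set of $x\in G_m$ with $x_j=0$ for $j<k$, $x_k\ne0$, $x_j=0$ for $k<j<l$, $x_l\neq0$, and $x_{l+1},\dots,x_{N-1}$ (and all later coordinates) arbitrary; for $l=N$, $I_N^{k,N}$ is the set of $x$ with $x_j=0$ for $j<N$, $j\ne k$, and $x_k\neq0$ (later coordinates arbitrary). *)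

(* Defs.v *)
From Stdlib Require Import Reals Arith.
Open Scope R_scope.

Fixpoint rsum (n : nat) (g : nat -> R) : R :=
  match n with
  | O => 0
  | S n' => rsum n' g + g n'
  end.

Fixpoint Mk (m : nat -> nat) (k : nat) : nat :=
  match k with
  | O => 1%nat
  | S k' => (m k' * Mk m k')%nat
  end.

Definition digit (m : nat -> nat) (n j : nat) : nat :=
  ((n / Mk m j) mod (m j))%nat.

Definition inG (m : nat -> nat) (x : nat -> nat) : Prop :=
  forall j, (x j < m j)%nat.

Definition vsub (m : nat -> nat) (x t : nat -> nat) : nat -> nat :=
  fun j => ((x j + (m j - t j)) mod (m j))%nat.

(* psi_n(y) = prod_j r_j(y)^{n_j} = exp(i * phase n y), where
   r_j(y) = exp(2 pi i y_j / m_j).  Only digits n_j with j < n can be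
   nonzero (as M_j >= 2^j > j when all m_j >= 2), so the product is
   over j < n. *)
Definition phase (m : nat -> nat) (n : nat) (y : nat -> nat) : R :=
  rsum n (fun j => 2 * PI * INR (digit m n j) * INR (y j) / INR (m j)).

(* Real and imaginary parts of D_q(y) = sum_{k<q} psi_k(y) *)
Definition ReD (m : nat -> nat) (q : nat) (y : nat -> nat) : R :=
  rsum q (fun k => cos (phase m k y)).
Definition ImD (m : nat -> nat) (q : nat) (y : nat -> nat) : R :=
  rsum q (fun k => sin (phase m k y)).

(* Real and imaginary parts of K_n = (1/n) sum_{q<n} D_q *)
Definition ReK (m : nat -> nat) (n : nat) (y : nat -> nat) : R :=
  / INR n * rsum n (fun q => ReD m q y).
Definition ImK (m : nat -> nat) (n : nat) (y : nat -> nat) : R :=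
  / INR n * rsum n (fun q => ImD m q y).

Definition absK (m : nat -> nat) (n : nat) (y : nat -> nat) : R :=
  sqrt (ReK m n y ^ 2 + ImK m n y ^ 2).

(* Sum over all values t_j in Z_{m_j} of the coordinates j = lo, ..., lo+len-1,
   all other coordinates being 0. *)
Fixpoint csum (m : nat -> nat) (lo len : nat) (f : (nat -> nat) -> R) : R :=
  match len with
  | O => f (fun _ => 0%nat)
  | S len' =>
      rsum (m lo) (fun a =>
        csum m (S lo) len' (fun t => f (fun i => if Nat.eqb i lo then a else t i)))
  end.

(* Integral over I_N (w.r.t. the Haar/product measure mu) of a function f
   depending only on the coordinates j < L (with N <= L):
   I_N is the disjoint union of the cosets {t_j fixed for j < L}, each of
   measure 1/M_L, with t_j = 0 for j < N. *)
Definition int_IN (m : nat -> nat) (N L : nat) (f : (nat -> nat) -> R) : R :=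
  / INR (Mk m L) * csum m N (L - N) f.

Definition in_INkl (N k l : nat) (x : nat -> nat) : Prop :=
  if Nat.eqb l N then
    (forall j, (j < N)%nat -> j <> k -> x j = 0%nat) /\ x k <> 0%nat
  else
    (forall j, (j < k)%nat -> x j = 0%nat) /\ x k <> 0%nat /\
    (forall j, (k < j)%nat -> (j < l)%nat -> x j = 0%nat) /\ x l <> 0%nat.

(* Main.v *)
Require Import Defs.
From Stdlib Require Import Reals Arith Lia Lra.
From Coquelicot Require Import Complex.
Open Scope R_scope.

Notation CC := Complex.C.
Definition ee (t : R) : CC := (cos t, sin t).
Fixpoint sC (n : nat) (g : nat -> CC) : CC :=
  match n with O => 0%C | S n' => (sC n' g + g n')%C end.

Lemma sC_ext n (f g : nat -> CC) : (forall i, (i < n)%nat -> f i = g i) -> sC n f = sC n g.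
Proof. induction n; simpl; intros H; auto. rewrite IHn by (intros; apply H; lia). rewrite H by lia. auto. Qed.

Lemma sC_add a b (g : nat -> CC) : sC (a + b) g = (sC a g + sC b (fun p => g (a + p)%nat))%C.
Proof. induction b; simpl. rewrite Nat.add_0_r. ring. rewrite Nat.add_succ_r. simpl. rewrite IHb. ring. Qed.

Lemma sC_block a R (g : nat -> CC) : sC (a * R) g = sC a (fun c => sC R (fun r => g (c * R + r)%nat)).
Proof. induction a; simpl. auto. rewrite Nat.add_comm, sC_add, IHa. auto. Qed.

Lemma sC_mull z n (g : nat -> CC) : sC n (fun i => z * g i)%C = (z * sC n g)%C.
Proof. induction n; simpl. ring. rewrite IHn. ring. Qed.

Lemma sC_zero n (g : nat -> CC) : (forall i, (i < n)%nat -> g i = 0%C) -> sC n g = 0%C.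
Proof. intros H. rewrite (sC_ext n g (fun _ => 0%C)) by exact H. clear H. induction n; simpl; auto. rewrite IHn. apply Cplus_0_l. Qed.

Lemma sC_bound n (g : nat -> CC) b : (forall i, (i < n)%nat -> Cmod (g i) <= b) -> Cmod (sC n g) <= INR n * b.
Proof. induction n; cbn [sC]; intros H. rewrite Cmod_0. simpl. lra.
  eapply Rle_trans. apply Cmod_triangle. rewrite S_INR. specialize (IHn ltac:(intros; apply H; lia)).
  specialize (H n ltac:(lia)). lra. Qed.

Lemma fst_sC n (g : nat -> CC) : fst (sC n g) = rsum n (fun i => fst (g i)).
Proof. induction n; simpl; auto. rewrite IHn; auto. Qed.
Lemma snd_sC n (g : nat -> CC) : snd (sC n g) = rsum n (fun i => snd (g i)).
Proof. induction n; simpl; auto. rewrite IHn; auto. Qed.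

Lemma ee_add a b : ee (a + b) = (ee a * ee b)%C.
Proof. unfold ee. rewrite cos_plus, sin_plus. unfold Cmult; simpl. f_equal; ring. Qed.
Lemma Cmod_ee a : Cmod (ee a) = 1.
Proof. unfold Cmod, ee; simpl. rewrite !Rmult_1_r. rewrite <- sqrt_1. f_equal. pose proof (sin2_cos2 a). unfold Rsqr in H. lra. Qed.
Lemma ee_0 : ee 0 = 1%C.
Proof. unfold ee. rewrite cos_0, sin_0. auto. Qed.

Section SB.
Variable m : nat -> nat.
Hypothesis hm2 : forall j, (2 <= m j)%nat.

Lemma Mk_pos j : (1 <= Mk m j)%nat.
Proof. induction j; simpl; auto. specialize (hm2 j). nia. Qed.

Lemma Mk_gt j : (j < Mk m j)%nat.
Proof. induction j; simpl; auto. specialize (hm2 j). nia. Qed.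

Lemma Mk_mul j d : exists R, Mk m (j + d) = (Mk m j * R)%nat.
Proof. induction d. exists 1%nat. rewrite Nat.add_0_r; lia.
  destruct IHd as [R HR]. exists (m (j+d) * R)%nat. rewrite Nat.add_succ_r. simpl. rewrite HR. ring. Qed.

Lemma Mk_mono j i : (j <= i)%nat -> (Mk m j <= Mk m i)%nat.
Proof. intros H. replace i with (j + (i - j))%nat by lia. destruct (Mk_mul j (i-j)) as [R HR].
  rewrite HR. destruct R. pose proof (Mk_pos (j + (i-j))). lia. nia. Qed.

Lemma digit_small q i : (q < Mk m i)%nat -> digit m q i = 0%nat.
Proof. intros H. unfold digit. rewrite Nat.div_small by auto. apply Nat.mod_0_l. specialize (hm2 i); lia. Qed.

Lemma digit_mult a j i : (i < j)%nat -> digit m (a * Mk m j) i = 0%nat.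
Proof. intros H. unfold digit. destruct (Mk_mul (S i) (j - S i)) as [R HR].
  replace (S i + (j - S i))%nat with j in HR by lia. rewrite HR. simpl.
  pose proof (Mk_pos i). pose proof (hm2 i).
  replace (a * (m i * Mk m i * R))%nat with ((a * m i * R) * Mk m i)%nat by ring.
  rewrite Nat.div_mul by lia. replace (a * m i * R)%nat with ((a * R) * m i)%nat by ring.
  apply Nat.mod_mul. lia. Qed.

Lemma digit_split a j b i : (b < Mk m j)%nat ->
  digit m (a * Mk m j + b) i = if Nat.ltb i j then digit m b i else digit m (a * Mk m j) i.
Proof. intros Hb. pose proof (Mk_pos i). pose proof (hm2 i). destruct (Nat.ltb_spec i j).
- unfold digit. destruct (Mk_mul (S i) (j - S i)) as [R HR].
  replace (S i + (j - S i))%nat with j in HR by lia. rewrite HR in *. simpl in *.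
  replace (a * (m i * Mk m i * R) + b)%nat with (b + (a * m i * R) * Mk m i)%nat by ring.
  rewrite Nat.div_add by lia. replace (a * m i * R)%nat with ((a * R) * m i)%nat by ring.
  rewrite Nat.mod_add by lia. auto.
- unfold digit. destruct (Mk_mul j (i - j)) as [R HR].
  replace (j + (i - j))%nat with i in HR by lia. rewrite HR. pose proof (Mk_pos j).
  assert (R <> 0%nat) by (intro; subst; lia).
  rewrite <- !Nat.div_div by lia. f_equal. f_equal.
  rewrite Nat.div_mul by lia. rewrite Nat.div_add_l by lia. rewrite Nat.div_small by auto. lia.
Qed.

Lemma rsum_add a b g : rsum (a + b) g = rsum a g + rsum b (fun p => g (a + p)%nat).
Proof. induction b; simpl. rewrite Nat.add_0_r. ring. rewrite Nat.add_succ_r. simpl. rewrite IHb. ring. Qed.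

Lemma rsum_ext n f g : (forall i, (i < n)%nat -> f i = g i) -> rsum n f = rsum n g.
Proof. induction n; simpl; intros H; auto. rewrite IHn by (intros; apply H; lia). rewrite H by lia. auto. Qed.

Lemma rsum_zero n g : (forall i, (i < n)%nat -> g i = 0) -> rsum n g = 0.
Proof. intros H. rewrite (rsum_ext n g (fun _ => 0)) by exact H. clear H. induction n; simpl; auto. rewrite IHn. ring. Qed.

Lemma rsum_plus n f g : rsum n (fun i => f i + g i) = rsum n f + rsum n g.
Proof. induction n; simpl. ring. rewrite IHn. ring. Qed.

Lemma rsum_single n g j : (j < n)%nat -> (forall i, (i < n)%nat -> i <> j -> g i = 0) -> rsum n g = g j.
Proof. induction n; intros Hj H. lia. simpl. destruct (Nat.eq_dec j n).
  subst. rewrite rsum_zero. ring. intros; apply H; lia.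
  rewrite IHn by (try lia; intros; apply H; lia). rewrite (H n) by lia. ring. Qed.

Definition term (q : nat) (y : nat -> nat) (j : nat) : R :=
  2 * PI * INR (digit m q j) * INR (y j) / INR (m j).

Lemma term0 q y j : digit m q j = 0%nat -> term q y j = 0.
Proof. intros H. unfold term. rewrite H. simpl. unfold Rdiv. ring. Qed.

Lemma phase_ext q y K : (q <= K)%nat -> phase m q y = rsum K (term q y).
Proof. intros H. unfold phase. fold (term q y). replace K with (q + (K - q))%nat by lia.
  rewrite rsum_add. rewrite (rsum_zero (K - q)). ring. intros i Hi. apply term0. apply digit_small.
  pose proof (Mk_gt (q + i)). lia. Qed.

Lemma phase_split a j b y : (b < Mk m j)%nat ->
  phase m (a * Mk m j + b) y = phase m (a * Mk m j) y + phase m b y.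
Proof. intros Hb.
  rewrite (phase_ext (a * Mk m j + b) y (a * Mk m j + b)), (phase_ext (a * Mk m j) y (a * Mk m j + b)), (phase_ext b y (a * Mk m j + b)) by lia.
  rewrite <- rsum_plus. apply rsum_ext. intros i _. unfold term at 1. rewrite digit_split by auto.
  destruct (Nat.ltb_spec i j).
  - rewrite (term0 (a * Mk m j)) by (apply digit_mult; auto). unfold term. ring.
  - rewrite (term0 b). unfold term. ring. apply digit_small. pose proof (Mk_mono j i H). lia.
Qed.

Lemma phase_zero q y : (forall i, digit m q i = 0%nat \/ y i = 0%nat) -> phase m q y = 0.
Proof. intros H. unfold phase. apply rsum_zero. intros i _. destruct (H i).
  fold (term q y i). apply term0; auto. rewrite H0. simpl. unfold Rdiv. ring. Qed.

Lemma phase_single c j y : (c < m j)%nat ->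
  phase m (c * Mk m j) y = 2 * PI * INR c * INR (y j) / INR (m j).
Proof. intros Hc. rewrite (phase_ext _ y (c * Mk m j + S j)) by lia.
  rewrite (rsum_single _ _ j).
  2: lia.
  2:{ intros i Hi Hij; apply term0.
     destruct (Nat.lt_ge_cases i j). apply digit_mult; auto. apply digit_small.
     pose proof (Mk_mono (S j) i ltac:(lia)). simpl in *. nia. }
  unfold term, digit. pose proof (Mk_pos j). rewrite Nat.div_mul by lia. rewrite Nat.mod_small by auto. auto.
Qed.

End SB.

Lemma sC_mulr z n (g : nat -> CC) : sC n (fun i => g i * z)%C = (sC n g * z)%C.
Proof. induction n; simpl. ring. rewrite IHn. ring. Qed.

Lemma geom t n : ((ee t - 1) * sC n (fun c => ee (INR c * t)))%C = (ee (INR n * t) - 1)%C.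
Proof. induction n; cbn [sC]. rewrite Rmult_0_l, ee_0. ring.
  replace ((ee t - 1) * (sC n (fun c => ee (INR c * t)) + ee (INR n * t)))%C with
   (((ee t - 1) * sC n (fun c => ee (INR c * t))) + (ee t - 1) * ee (INR n * t))%C by ring.
  rewrite IHn. rewrite S_INR. replace ((INR n + 1) * t) with (INR n * t + t) by ring.
  rewrite ee_add. ring. Qed.

Lemma ee_neq1 t : 0 < t < 2 * PI -> ee t <> 1%C.
Proof. intros [H1 H2] E. unfold ee in E. injection E as Ec Es.
  destruct (Rlt_or_le t PI).
  - pose proof (sin_gt_0 t H1 H). lra.
  - destruct H. pose proof (sin_lt_0 t H H2). lra. subst. rewrite cos_PI in Ec. lra. Qed.

Lemma ee_2pi k : ee (2 * INR k * PI) = 1%C.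
Proof. unfold ee. replace (2 * INR k * PI) with (0 + 2 * INR k * PI) by ring.
  rewrite cos_period, sin_period, cos_0, sin_0. auto. Qed.

Section SC.
Variable m : nat -> nat.
Hypothesis hm2 : forall j, (2 <= m j)%nat.

Definition psi q y := ee (phase m q y).
Definition DC q y := sC q (fun p => psi p y).
Definition SS n y := sC n (fun q => DC q y).

Lemma Cmod_psi q y : Cmod (psi q y) = 1.
Proof. apply Cmod_ee. Qed.

Lemma psi_split a j b y : (b < Mk m j)%nat -> psi (a * Mk m j + b) y = (psi (a * Mk m j) y * psi b y)%C.
Proof. intros H. unfold psi. rewrite phase_split by auto. apply ee_add. Qed.

Lemma root_sum j y : (0 < y j < m j)%nat -> sC (m j) (fun c => psi (c * Mk m j) y) = 0%C.
Proof. intros [H1 H2]. pose proof (hm2 j).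
  set (t := 2 * PI * INR (y j) / INR (m j)).
  assert (Hm : 0 < INR (m j)) by (apply lt_0_INR; lia).
  rewrite (sC_ext _ _ (fun c => ee (INR c * t))).
  2:{ intros i Hi. unfold psi. rewrite phase_single by auto. f_equal. unfold t. field. lra. }
  assert (Ht: ee t <> 1%C).
  { apply ee_neq1. unfold t. split.
    - apply Rdiv_lt_0_compat; auto. pose proof PI_RGT_0. apply Rmult_lt_0_compat. lra. apply lt_0_INR; lia.
    - apply Rmult_lt_reg_r with (INR (m j)); auto. unfold Rdiv. rewrite Rmult_assoc, Rinv_l by lra.
      pose proof PI_RGT_0. apply lt_INR in H2. nra. }
  pose proof (geom t (m j)) as G.
  replace (INR (m j) * t) with (2 * INR (y j) * PI) in G by (unfold t; field; lra).
  rewrite ee_2pi in G. unfold Cminus in G. rewrite Cplus_opp_r in G.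
  destruct (Ceq_dec (sC (m j) (fun c => ee (INR c * t))) 0) as [E|E]; auto.
  exfalso. apply Cmult_neq_0 in G; auto. intro X. apply Ht. 
  rewrite <- (Cplus_0_l 1), <- X. ring.
Qed.


Lemma Cmod_DC b y : Cmod (DC b y) <= INR b.
Proof. unfold DC. rewrite <- (Rmult_1_r (INR b)). apply sC_bound. intros. rewrite Cmod_psi. lra. Qed.

Lemma psi_one q y : (forall i, digit m q i = 0%nat \/ y i = 0%nat) -> psi q y = 1%C.
Proof. intros H. unfold psi. rewrite phase_zero by auto. apply ee_0. Qed.

Lemma DC_split a j b y : (b <= Mk m j)%nat ->
  DC (a * Mk m j + b) y = (DC (a * Mk m j) y + psi (a * Mk m j) y * DC b y)%C.
Proof. intros H. unfold DC. rewrite sC_add. f_equal. rewrite <- sC_mull. apply sC_ext.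
  intros. apply psi_split; auto. lia. Qed.

Lemma DP0 k y : (forall i, (i < k)%nat -> y i = 0%nat) -> (0 < y k < m k)%nat -> DC (Mk m (S k)) y = 0%C.
Proof. intros H0 Hk. unfold DC. cbn [Mk]. rewrite sC_block.
  rewrite (sC_ext _ _ (fun c => psi (c * Mk m k) y * sC (Mk m k) (fun _ => 1%C))%C).
  2:{ intros c Hc. rewrite <- sC_mull. apply sC_ext. intros r Hr. rewrite psi_split by auto.
      rewrite (psi_one r). ring. intros i. destruct (Nat.lt_ge_cases i k). right; auto.
      left. apply digit_small; auto. pose proof (Mk_mono m hm2 k i H). lia. }
  rewrite sC_mulr. rewrite root_sum by auto. ring. Qed.

Lemma DaP0 k y a : (forall i, (i < k)%nat -> y i = 0%nat) -> (0 < y k < m k)%nat -> DC (a * Mk m (S k)) y = 0%C.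
Proof. intros H0 Hk. induction a. reflexivity.
  replace (S a * Mk m (S k))%nat with (a * Mk m (S k) + Mk m (S k))%nat by ring.
  rewrite DC_split by lia. rewrite IHa, DP0 by auto. ring. Qed.

Lemma DC_bound k y q : (forall i, (i < k)%nat -> y i = 0%nat) -> (0 < y k < m k)%nat ->
  Cmod (DC q y) <= INR (Mk m (S k)).
Proof. intros H0 Hk. pose proof (Mk_pos m hm2 (S k)).
  rewrite (Nat.div_mod_eq q (Mk m (S k))). rewrite Nat.mul_comm.
  rewrite DC_split. rewrite DaP0 by auto. rewrite Cplus_0_l, Cmod_mult, Cmod_psi, Rmult_1_l.
  eapply Rle_trans. apply Cmod_DC. apply le_INR. pose proof (Nat.mod_upper_bound q (Mk m (S k))). lia.
  pose proof (Nat.mod_upper_bound q (Mk m (S k))). lia. Qed.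

Definition Zs C l y := sC C (fun c => psi (c * Mk m l) y).

Lemma Zs_triv C l y : Cmod (Zs C l y) <= INR C.
Proof. unfold Zs. rewrite <- (Rmult_1_r (INR C)). apply sC_bound. intros. rewrite Cmod_psi. lra. Qed.

Lemma Zs_per C l y : (0 < y l < m l)%nat -> Cmod (Zs C l y) <= INR (m l).
Proof. intros Hl. pose proof (hm2 l). unfold Zs.
  rewrite (Nat.div_mod_eq C (m l)). rewrite sC_add. rewrite (Nat.mul_comm (m l)), sC_block.
  rewrite sC_zero. rewrite Cplus_0_l.
  - rewrite <- (Rmult_1_r (INR (m l))). eapply Rle_trans. apply sC_bound. intros. rewrite Cmod_psi. apply Rle_refl.
    rewrite Rmult_1_r, Rmult_1_r. apply le_INR. pose proof (Nat.mod_upper_bound C (m l)). lia.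
  - intros u _. rewrite (sC_ext _ _ (fun v => psi (u * Mk m (S l)) y * psi (v * Mk m l) y)%C).
    rewrite sC_mull. fold (Zs (m l) l y). unfold Zs. rewrite root_sum by auto. ring.
    intros v Hv. rewrite <- psi_split. f_equal. cbn [Mk]. ring. cbn [Mk]. pose proof (Mk_pos m hm2 l). nia.
Qed.

Lemma SS_decomp k l y C E : (k < l)%nat -> (forall i, (i < k)%nat -> y i = 0%nat) -> (0 < y k < m k)%nat ->
  Cmod (SS (C * Mk m l + E) y) <= Cmod (Zs C l y) * (INR (Mk m l) * INR (Mk m (S k))) + INR E * INR (Mk m (S k)).
Proof. intros Hkl H0 Hk. unfold SS. rewrite sC_add. eapply Rle_trans. apply Cmod_triangle.
  apply Rplus_le_compat.
  - rewrite sC_block. destruct (Mk_mul m (S k) (l - S k)) as [R HR].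
    replace (S k + (l - S k))%nat with l in HR by lia.
    rewrite (sC_ext _ _ (fun c => psi (c * Mk m l) y * sC (Mk m l) (fun d => DC d y))%C).
    + rewrite sC_mulr. fold (Zs C l y). rewrite Cmod_mult. apply Rmult_le_compat_l. apply Cmod_ge_0.
      apply sC_bound. intros. apply DC_bound with (k := k); auto.
    + intros c Hc. rewrite <- sC_mull. apply sC_ext. intros d Hd. rewrite DC_split by lia.
      assert (Z: DC (c * Mk m l) y = 0%C).
      { rewrite HR. replace (c * (Mk m (S k) * R))%nat with ((c * R) * Mk m (S k))%nat by ring.
        apply DaP0; auto. }
      rewrite Z. ring.
  - apply sC_bound. intros. apply DC_bound with (k := k); auto.
Qed.

End SC.

Fixpoint prodm (m : nat -> nat) (lo len : nat) : nat :=
  match len with O => 1%nat | S len' => (m lo * prodm m (S lo) len')%nat end.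

Lemma Mk_prodm m len : forall lo, Mk m (lo + len) = (Mk m lo * prodm m lo len)%nat.
Proof. induction len; intros lo; simpl. rewrite Nat.add_0_r; lia.
  rewrite Nat.add_succ_r. rewrite <- Nat.add_succ_l. rewrite IHlen. simpl. ring. Qed.

Lemma rsum_le n f g : (forall i, (i < n)%nat -> f i <= g i) -> rsum n f <= rsum n g.
Proof. induction n; simpl; intros H. lra. apply Rplus_le_compat. apply IHn; intros; apply H; lia. apply H; lia. Qed.

Lemma rsum_const n c : rsum n (fun _ => c) = INR n * c.
Proof. induction n. simpl. ring. cbn [rsum]. rewrite IHn, S_INR. ring. Qed.

Lemma csum_bound m len : forall lo f c,
  (forall t, (forall i, (i < lo)%nat -> t i = 0%nat) -> f t <= c) ->
  csum m lo len f <= INR (prodm m lo len) * c.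
Proof. induction len; intros lo f c H; cbn [csum prodm].
  - simpl. rewrite Rmult_1_l. apply H. auto.
  - eapply Rle_trans. apply rsum_le with (g := fun _ => INR (prodm m (S lo) len) * c).
    intros a _. apply IHlen. intros t Ht. apply H. intros i Hi.
    destruct (Nat.eqb_spec i lo). lia. apply Ht. lia.
    rewrite rsum_const, mult_INR. lra. Qed.

Lemma absK_eq m n y : absK m n y = Cmod (RtoC (/ INR n) * SS m n y)%C.
Proof. unfold absK, Cmod, ReK, ImK, SS, ReD, ImD. f_equal. simpl.
  rewrite fst_sC, snd_sC.
  rewrite (rsum_ext n (fun q => rsum q (fun k => cos (phase m k y))) (fun i => fst (DC m i y))).
  rewrite (rsum_ext n (fun q => rsum q (fun k => sin (phase m k y))) (fun i => snd (DC m i y))). ring.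
  all: intros; unfold DC; rewrite ?fst_sC, ?snd_sC; reflexivity.
Qed.

Lemma final_real s nn MN K : 0 < nn -> 0 < MN -> s * MN <= K * nn -> / nn * s <= K / MN.
Proof. intros H1 H2 H3. apply Rmult_le_reg_r with (nn * MN). nra.
  replace (/ nn * s * (nn * MN)) with (s * MN) by (field; lra).
  replace (K / MN * (nn * MN)) with (K * nn) by (field; lra). auto. Qed.

Lemma point m (hm2 : forall j, (2 <= m j)%nat) Bv (hB : forall j, (m j <= Bv)%nat) N k l y n :
  (k < l)%nat -> (l <= N)%nat -> (forall i, (i < k)%nat -> y i = 0%nat) -> (0 < y k < m k)%nat ->
  (l = N \/ (0 < y l < m l)%nat) -> (Mk m N <= n)%nat ->
  absK m n y <= INR (Bv + 1) * INR Bv * INR (Mk m l) * INR (Mk m k) / INR (Mk m N).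
Proof. intros Hkl HlN H0 Hk Hl Hn.
  pose proof (Mk_pos m hm2 l) as HQ. pose proof (Mk_pos m hm2 N) as HN. pose proof (Mk_pos m hm2 k) as HK.
  pose proof (Mk_mono m hm2 l N HlN) as HlNm.
  rewrite absK_eq, Cmod_mult, Cmod_R, Rabs_right.
  2:{ apply Rle_ge, Rlt_le, Rinv_0_lt_compat, lt_0_INR. lia. }
  pose proof (SS_decomp m hm2 k l y (n / Mk m l) (n mod Mk m l) Hkl H0 Hk) as HS.
  rewrite <- (Nat.mul_comm (Mk m l)), <- Nat.div_mod_eq in HS.
  pose proof (Nat.mod_upper_bound n (Mk m l) ltac:(lia)) as HE.
  pose proof (Nat.mul_div_le n (Mk m l) ltac:(lia)) as HC.
  set (s := Cmod (SS m n y)) in *. set (z := Cmod (Zs m (n / Mk m l) l y)) in *.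
  assert (Hz0 : 0 <= z) by apply Cmod_ge_0.
  assert (Hs0 : 0 <= s) by apply Cmod_ge_0.
  change (Mk m (S k)) with (m k * Mk m k)%nat in HS. rewrite mult_INR in HS.
  apply lt_INR in HE. apply le_INR in HC. rewrite mult_INR in HC. apply le_INR in Hn. apply le_INR in HlNm.
  assert (hb : (m k <= Bv)%nat) by auto. apply le_INR in hb. pose proof (hm2 k) as h2. apply le_INR in h2.
  apply le_INR in HQ. apply le_INR in HN. apply le_INR in HK. simpl in h2, HQ, HN, HK.
  rewrite plus_INR. change (INR 1) with 1.
  set (nn := INR n) in *. set (MN := INR (Mk m N)) in *. set (q := INR (Mk m l)) in *.
  set (mk := INR (Mk m k)) in *. set (b := INR Bv) in *. set (e := INR (n mod Mk m l)) in *.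
  set (mkk := INR (m k)) in *. set (c := INR (n / Mk m l)) in *.
  apply final_real; try lra.
  destruct Hl as [Hl | Hl].
  - subst l. assert (z <= c) by apply Zs_triv. fold q MN in HlNm. 
    assert (HqN : q = MN) by (unfold q, MN; reflexivity).
    assert (s <= 2 * nn * (mkk * mk)).
    { eapply Rle_trans. apply HS. assert (z * q <= c * q) by (apply Rmult_le_compat_r; lra).
      assert (z * q <= nn) by lra. assert (e <= nn) by lra.
      assert (0 <= mkk * mk) by nra. nra. }
    assert (mkk * mk <= b * mk) by nra.
    assert (s <= 2 * nn * (b * mk)) by nra.
    assert (s * MN <= 2 * nn * (b * mk) * MN) by (apply Rmult_le_compat_r; lra).
    assert (0 <= nn * (b * mk) * MN) by (apply Rmult_le_pos; [apply Rmult_le_pos|]; nra).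
    assert (2 * (nn * (b * mk) * MN) <= (b + 1) * (nn * (b * mk) * MN)) by (apply Rmult_le_compat_r; lra).
    replace ((b + 1) * b * q * mk * nn) with ((b + 1) * (nn * (b * mk) * MN)) by (rewrite HqN; ring).
    lra.
  - assert (z <= b). { eapply Rle_trans. apply Zs_per; auto. apply le_INR. auto. }
    assert (Hs1 : s <= (b + 1) * q * (mkk * mk)).
    { eapply Rle_trans. apply HS. assert (0 <= mkk * mk) by nra.
      assert (z * (q * (mkk * mk)) <= b * (q * (mkk * mk))) by (apply Rmult_le_compat_r; nra).
      assert (e * (mkk * mk) <= q * (mkk * mk)) by (apply Rmult_le_compat_r; nra). nra. }
    assert (mkk * mk <= b * mk) by nra.
    assert (s <= (b + 1) * q * (b * mk)).
    { eapply Rle_trans. apply Hs1. apply Rmult_le_compat_l; nra. }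
    assert (s * MN <= (b + 1) * q * (b * mk) * MN) by (apply Rmult_le_compat_r; lra).
    assert ((b + 1) * q * (b * mk) * MN <= (b + 1) * q * (b * mk) * nn) by (apply Rmult_le_compat_l; nra).
    nra.
Qed.

Lemma vsub_low m x t i : (x i < m i)%nat -> t i = 0%nat -> vsub m x t i = x i.
Proof. intros H Ht. unfold vsub. rewrite Ht, Nat.sub_0_r.
  replace (x i + m i)%nat with (x i + 1 * m i)%nat by lia. rewrite Nat.mod_add by lia.
  apply Nat.mod_small; auto. Qed.

Theorem lemma4 (m : nat -> nat)
  (hm2 : forall j, (2 <= m j)%nat)
  (hbdd : exists B, forall j, (m j <= B)%nat) :
  exists c : R,
    forall (N k l : nat) (x : nat -> nat),
      (1 <= N)%nat ->
      (k <= N - 1)%nat -> (k + 1 <= l)%nat -> (l <= N)%nat ->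
      inG m x -> in_INkl N k l x ->
      forall n : nat, (Mk m N <= n)%nat ->
      forall L : nat, (N <= L)%nat -> (n < Mk m L)%nat ->
        int_IN m N L (fun t => absK m n (vsub m x t))
          <= c * INR (Mk m l) * INR (Mk m k) / INR (Mk m N) ^ 2.
Proof.
  destruct hbdd as [Bv hB]. exists (INR (Bv + 1) * INR Bv).
  intros N k l x HN Hk Hkl HlN Hx Hin n Hn L HNL HnL.
  set (T := INR (Bv + 1) * INR Bv * INR (Mk m l) * INR (Mk m k) / INR (Mk m N)).
  assert (Hb : forall t, (forall i, (i < N)%nat -> t i = 0%nat) -> absK m n (vsub m x t) <= T).
  { intros t Ht. unfold T. assert (Hy : forall i, (i < N)%nat -> vsub m x t i = x i).
    { intros i Hi. apply vsub_low; auto. }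
    unfold in_INkl in Hin. destruct (Nat.eqb_spec l N) as [E|E].
    - destruct Hin as [H1 H2]. refine (point m hm2 Bv hB N k l (vsub m x t) n _ _ _ _ _ _); try lia.
      + intros i Hi. rewrite Hy by lia. apply H1; lia.
      + rewrite Hy by lia. pose proof (Hx k). lia.
    - destruct Hin as [H1 [H2 [H3 H4]]]. refine (point m hm2 Bv hB N k l (vsub m x t) n _ _ _ _ _ _); try lia.
      + intros i Hi. rewrite Hy by lia. apply H1; lia.
      + rewrite Hy by lia. pose proof (Hx k). lia.
      + right. rewrite Hy by lia. pose proof (Hx l). lia. }
  unfold int_IN. pose proof (Mk_pos m hm2 N). pose proof (Mk_pos m hm2 L).
  eapply Rle_trans. apply Rmult_le_compat_l. left. apply Rinv_0_lt_compat, lt_0_INR; lia.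
  apply csum_bound. exact Hb.
  pose proof (Mk_prodm m (L - N) N) as HP. replace (N + (L - N))%nat with L in HP by lia.
  rewrite HP, mult_INR. rewrite HP in H0.
  assert (0 < INR (prodm m N (L - N))) by (apply lt_0_INR; nia).
  assert (0 < INR (Mk m N)) by (apply lt_0_INR; lia).
  unfold T. right. field. lra.
Qed.
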